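(* Consider fair division instances with $n$ agents, $m$ divisible goods, additive valuations and generalized assignment constraints (constraints publicly known, valuations reported). Consider the mechanism: set $\mathcal{P}=\emptyset$; for $i=1,\dots,n$, let $q_i$ be the optimal value of the linear program in variables $\{x_{j,g}\}_{j\le i,g\in[m]}$ maximizing $v_i(x_i)$ subject to $x_{j,g}\ge0$, $\sum_{j\le i}x_{j,g}\le1$ for all $g$, $x_j$ feasible for $j$ for all $j\le i$, and all constraints in $\mathcal{P}$; then add the constraint $v_i(x_i)=q_i$ to $\mathcal{P}$. Finally output any $x=(x_1,\dots,x_n)$ with $x_{j,g}\ge0$, $\sum_{j}x_{j,g}\le1$, $x_j$ feasible for $j$ for all $j$, and satisfying all constraints in $\mathcal{P}$. This mechanism is truthful and always outputs a Pareto-optimal allocation.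
   Context: Additive valuations: $v_i(y)=\sum_g y_g v_{i,g}$, $v_{i,g}\ge0$, where $v_i$ is agent $i$'s reported valuation. Generalized assignment constraints: agent $i$ has sizes $s_i(g)\ge0$ and budget $B_i$; bundle $y$ is feasible for $i$ iff $\sum_g s_i(g)y_g\le B_i$. A feasible allocation $x$ is Pareto-optimal if no feasible allocation $z$ has $v_i(z_i)\ge v_i(x_i)$ for all $i$ with some inequality strict. A mechanism maps reported valuation profiles to feasible allocations; it is truthful if no agent can obtain a bundle of strictly higher true value by misreporting her valuation, for any reports of the other agents. *)

(* Defs.v *)
From mathcomp Require Import all_boot all_order all_algebra.
Set Implicit Arguments. Unset Strict Implicit. Unset Printing Implicit Defensive.
Import Order.TTheory GRing.Theory Num.Theory.
Local Open Scope ring_scope.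

Section FairDivision.
Variables (R : realFieldType) (n m : nat).

Definition profile := 'I_n -> 'I_m -> R.
Definition allocation := 'I_n -> 'I_m -> R.

Definition val (vi : 'I_m -> R) (y : 'I_m -> R) : R := \sum_(g < m) y g * vi g.

Definition valid_valuation (vi : 'I_m -> R) : Prop := forall g, 0 <= vi g.
Definition valid_profile (v : profile) : Prop := forall i, valid_valuation (v i).

(* generalized assignment constraint of agent j: sum_g s_j(g) y_g <= B_j *)
Definition bundle_feasible (s : 'I_n -> 'I_m -> R) (B : 'I_n -> R) (j : 'I_n)
  (y : 'I_m -> R) : Prop := \sum_(g < m) s j g * y g <= B j.

Definition feasible_alloc (s : 'I_n -> 'I_m -> R) (B : 'I_n -> R)
  (x : allocation) : Prop :=
  [/\ forall j g, 0 <= x j g,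
      forall g, \sum_(j < n) x j g <= 1
    & forall j, bundle_feasible s B j (x j)].

Definition pareto_optimal (s : 'I_n -> 'I_m -> R) (B : 'I_n -> R)
  (v : profile) (x : allocation) : Prop :=
  feasible_alloc s B x /\
  ~ (exists z : allocation, feasible_alloc s B z /\
       (forall i, val (v i) (x i) <= val (v i) (z i)) /\
       (exists i, val (v i) (x i) < val (v i) (z i))).

(* Feasible region of the i-th LP: variables x_{j,g} for j <= i (the entries
   of y for agents j > i are ignored), constraints x_{j,g} >= 0,
   sum_{j<=i} x_{j,g} <= 1, x_j feasible for j, and the constraints of P,
   i.e. v_j(x_j) = q_j for all j < i. *)
Definition LP_region (s : 'I_n -> 'I_m -> R) (B : 'I_n -> R) (v : profile)
  (q : 'I_n -> R) (i : 'I_n) (y : allocation) : Prop :=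
  [/\ forall (j : 'I_n) g, (j <= i)%N -> 0 <= y j g,
      forall g, \sum_(j < n | (j <= i)%N) y j g <= 1,
      forall j : 'I_n, (j <= i)%N -> bundle_feasible s B j (y j)
    & forall j : 'I_n, (j < i)%N -> val (v j) (y j) = q j].

Definition LP_values (s : 'I_n -> 'I_m -> R) (B : 'I_n -> R) (v : profile)
  (q : 'I_n -> R) : Prop :=
  forall i : 'I_n,
    (exists y, LP_region s B v q i y /\ val (v i) (y i) = q i) /\
    (forall y, LP_region s B v q i y -> val (v i) (y i) <= q i).

Definition mechanism_output (s : 'I_n -> 'I_m -> R) (B : 'I_n -> R)
  (v : profile) (x : allocation) : Prop :=
  exists q, LP_values s B v q /\ feasible_alloc s B x /\
            (forall j, val (v j) (x j) = q j).

Definition update (v : profile) (i : 'I_n) (w : 'I_m -> R) : profile :=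
  fun j => if j == i then w else v j.

Definition truthful (M : profile -> allocation) : Prop :=
  forall (v : profile) (i : 'I_n) (w : 'I_m -> R),
    valid_profile v -> valid_valuation w ->
    val (v i) (M (update v i w) i) <= val (v i) (M v i).

End FairDivision.

(* Main.v *)
Require Import Defs.
From mathcomp Require Import all_boot all_order all_algebra.
Set Implicit Arguments. Unset Strict Implicit. Unset Printing Implicit Defensive.
Import Order.TTheory GRing.Theory Num.Theory.
Local Open Scope ring_scope.

Section Aux.
Variables (R : realFieldType) (n m : nat).
Variables (s : 'I_n -> 'I_m -> R) (B : 'I_n -> R).

Lemma strong_ord (P : 'I_n -> Prop) :
  (forall j : 'I_n, (forall k : 'I_n, (k < j)%N -> P k) -> P j) -> forall j, P j.
Proof.
move=> H.
suff: forall N (j : 'I_n), (j < N)%N -> P j by move=> S j; exact: (S j.+1).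
elim=> [|N IH] j //= hj.
apply: H => k hk; apply: IH; exact: leq_trans hk hj.
Qed.

Lemma region_of_feas (v : profile R n m) (q : 'I_n -> R) (i : 'I_n) (z : allocation R n m) :
  feasible_alloc s B z ->
  (forall k : 'I_n, (k < i)%N -> Defs.val (v k) (z k) = q k) ->
  LP_region s B v q i z.
Proof.
case=> h0 h1 h2 hq; split=> //.
move=> g; apply: le_trans (h1 g).
rewrite [X in _ <= X](bigID (fun j : 'I_n => (j <= i)%N)) /= lerDl.
by apply: sumr_ge0 => j _; apply: h0.
Qed.

Lemma all_eq (v : profile R n m) q (z : allocation R n m) :
  LP_values s B v q -> feasible_alloc s B z ->
  (forall j, q j <= Defs.val (v j) (z j)) -> forall j, Defs.val (v j) (z j) = q j.
Proof.
move=> hL hz hge; apply: strong_ord => j IH.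
apply/eqP; rewrite eq_le hge andbT.
apply: (proj2 (hL j)); exact: region_of_feas.
Qed.

Lemma q_agree (v v' : profile R n m) q q' (i : 'I_n) :
  LP_values s B v q -> LP_values s B v' q' ->
  (forall j : 'I_n, (j < i)%N -> v' j = v j) ->
  forall j : 'I_n, (j < i)%N -> q' j = q j.
Proof.
move=> hL hL' hv.
suff: forall j : 'I_n, ((j < i)%N -> q' j = q j) by [].
apply: strong_ord => j IH hj.
have hvk : forall k : 'I_n, (k <= j)%N -> v' k = v k.
  by move=> k hk; apply: hv; exact: leq_ltn_trans hk hj.
have hqk : forall k : 'I_n, (k < j)%N -> q' k = q k.
  by move=> k hk; apply: IH => //; exact: ltn_trans hk hj.
apply/eqP; rewrite eq_le; apply/andP; split.
- case: (hL' j) => [[y [[r0 r1 r2 r3] hy]] _].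
  rewrite -hy (hvk j (leqnn _)); apply: (proj2 (hL j)); split=> //.
  by move=> k hk; rewrite -(hqk k hk) -(hvk k (ltnW hk)) (r3 k hk).
- case: (hL j) => [[y [[r0 r1 r2 r3] hy]] _].
  rewrite -hy -(hvk j (leqnn _)); apply: (proj2 (hL' j)); split=> //.
  by move=> k hk; rewrite (hqk k hk) (hvk k (ltnW hk)) (r3 k hk).
Qed.

End Aux.

Theorem theorem6 (R : realFieldType) (n m : nat)
  (s : 'I_n -> 'I_m -> R) (B : 'I_n -> R)
  (hs : forall i g, 0 <= s i g)
  (M : profile R n m -> allocation R n m)
  (hM : forall v : profile R n m, valid_profile v ->
          mechanism_output s B v (M v)) :
  truthful M /\
  (forall v : profile R n m, valid_profile v -> pareto_optimal s B v (M v)).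
Proof.
split.
- move=> v i w hv hw.
  have hv' : valid_profile (update v i w).
    by move=> j; rewrite /update; case: (j == i).
  case: (hM v hv) => q [hL [hx hxq]].
  case: (hM _ hv') => q' [hL' [hx' hxq']].
  have hvv : forall j : 'I_n, (j < i)%N -> update v i w j = v j.
    by move=> j hj; rewrite /update; case: eqP => // e; rewrite e ltnn in hj.
  have hqq := q_agree hL hL' hvv.
  rewrite hxq; apply: (proj2 (hL i)); apply: region_of_feas => // k hk.
  by rewrite -hvv // hxq' hqq.
- move=> v hv; case: (hM v hv) => q [hL [hx hxq]].
  split=> // -[z [hz [hle [i hlt]]]].
  have hge : forall j, q j <= Defs.val (v j) (z j) by move=> j; rewrite -hxq; exact: hle j.
  have := all_eq hL hz hge.
  by move=> /(_ i) e; move: hlt; rewrite e hxq ltxx.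
Qed.
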